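(* In the binary noisy-label setting described in the context, if $e_+,e_-<0.5$, then for all $y,y'\in\{-1,+1\}$, $$\left|\frac{\tilde P(y,y')}{\tilde Q(y,y')}-1\right|=O\big(1-e_+-e_-\big).$$
   Context: $(X,Y)$ with $X\in\mathcal X$, $Y\in\{-1,+1\}$; noisy label $\tilde Y$ generated from $Y$, conditionally independently of $X$ given $Y$, with $e_+={\mathbb P}(\tilde Y=-1\mid Y=+1)$, $e_-={\mathbb P}(\tilde Y=+1\mid Y=-1)$, $e_++e_-<1$. $h:\mathcal X\to\{-1,+1\}$ is a classifier, $\tilde P(y,y')={\mathbb P}(h(X)=y,\tilde Y=y')$ and $\tilde Q(y,y')={\mathbb P}(h(X)=y)\,{\mathbb P}(\tilde Y=y')$. The $O(\cdot)$ is with respect to the noise rates $e_+,e_-$, with $h$ and the distribution of $(X,Y)$ fixed. *)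

(* Defs.v *)
(* Labels: true = +1, false = -1. *)
From HB Require Import structures.
From mathcomp Require Import all_boot all_order all_algebra.
From mathcomp Require Import all_classical all_reals all_analysis.
Set Implicit Arguments. Unset Strict Implicit. Unset Printing Implicit Defensive.
Import Order.TTheory GRing.Theory Num.Theory.
Local Open Scope classical_set_scope.
Local Open Scope ring_scope.

Section NoisyDefs.
Context {R : realType} {d : measure_display} {Omega : measurableType d}.

Definition pr (P : probability Omega R) (A : set Omega) : R := fine (P A).

(* noise transition P(Ytilde = y' | Y = t), with
   e_+ = P(Ytilde=-1 | Y=+1), e_- = P(Ytilde=+1 | Y=-1) *)
Definition noise (ep em : R) (t y' : bool) : R :=
  if t then (if y' then 1 - ep else ep) else (if y' then em else 1 - em).

(* Ptilde(y,y') = P(h(X)=y, Ytilde=y'); since Ytilde is generated from Y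
   conditionally independently of X given Y, this is
   sum_t P(h(X)=y, Y=t) * P(Ytilde=y' | Y=t). *)
Definition Ptilde (P : probability Omega R) {T : Type} (X : Omega -> T)
  (Y : Omega -> bool) (h : T -> bool) (ep em : R) (y y' : bool) : R :=
  \sum_(t : bool) pr P [set w | h (X w) = y /\ Y w = t] * noise ep em t y'.

Definition Pnoisy (P : probability Omega R) (Y : Omega -> bool)
  (ep em : R) (y' : bool) : R :=
  \sum_(t : bool) pr P [set w | Y w = t] * noise ep em t y'.

Definition Qtilde (P : probability Omega R) {T : Type} (X : Omega -> T)
  (Y : Omega -> bool) (h : T -> bool) (ep em : R) (y y' : bool) : R :=
  pr P [set w | h (X w) = y] * Pnoisy P Y ep em y'.

End NoisyDefs.

(* Main.v *)
Require Import Defs.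
From HB Require Import structures.
From mathcomp Require Import all_boot all_order all_algebra.
From mathcomp Require Import all_classical all_reals all_analysis.
From mathcomp Require Import ring lra.
Import Order.TTheory GRing.Theory Num.Theory.
Local Open Scope classical_set_scope.
Local Open Scope ring_scope.

Section H.
Context {R : realType} {d : measure_display} {Omega : measurableType d}.
Variable P : probability Omega R.

Lemma prU (A B : set Omega) : measurable A -> measurable B -> A `&` B = set0 ->
  pr P (A `|` B) = pr P A + pr P B.
Proof.
move=> mA mB AB; rewrite /pr measureU //; apply: fineD; exact: fin_num_measure.
Qed.

Lemma prle (A B : set Omega) : measurable A -> measurable B -> A `<=` B ->
  pr P A <= pr P B.
Proof.
move=> mA mB AB; rewrite /pr; apply: fine_le; rewrite ?inE; try exact: fin_num_measure.
by apply: le_measure; rewrite ?inE.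
Qed.

Lemma prge0 (A : set Omega) : 0 <= pr P A.
Proof. rewrite /pr; apply: fine_ge0; exact: measure_ge0. Qed.

Lemma prT : pr P setT = 1.
Proof. by rewrite /pr probability_setT. Qed.
End H.

Theorem proposition1 (R : realType) (d : measure_display) (Omega : measurableType d)
  (P : probability Omega R) (T : Type) (X : Omega -> T) (Y : Omega -> bool)
  (h : T -> bool)
  (hmeas : forall y t : bool, measurable [set w | h (X w) = y /\ Y w = t])
  (hmeasX : forall y : bool, measurable [set w | h (X w) = y])
  (hmeasY : forall t : bool, measurable [set w | Y w = t]) :
  forall y y' : bool, exists C : R,
    forall ep em : R, 0 <= ep -> ep < 1 / 2 -> 0 <= em -> em < 1 / 2 ->
      Qtilde P X Y h ep em y y' != 0 ->
      `| Ptilde P X Y h ep em y y' / Qtilde P X Y h ep em y y' - 1 |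
        <= C * (1 - ep - em).
Proof.
move=> y y'.
set a := fun t => pr P [set w | h (X w) = y /\ Y w = t].
set b := pr P [set w | h (X w) = y].
set p := fun t => pr P [set w | Y w = t].
have hb : b = a true + a false.
  rewrite /b /a -prU //. congr (pr P _); apply/seteqP; split=> w /=.
    by case E: (Y w) => ->; [left|right].
  by case=> -[].
  by apply/seteqP; split=> w //= [[_ ->] [_]].
have hp : p true + p false = 1.
  rewrite /p -prU //; last by apply/seteqP; split=> w //= [->].
  transitivity (pr P setT); last exact: prT.
  congr (pr P _); apply/seteqP; split=> w //= _.
  by case: (Y w); [left|right].
have hap : forall t, a t <= p t.
  by move=> t; apply: prle => // w /= [].
have ha0 : forall t, 0 <= a t by move=> t; apply: prge0.
have hp0 : forall t, 0 <= p t by move=> t; apply: prge0.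
set N := a true * p false - a false * p true.
exists (2 * `|N| / (b * p y')).
move=> ep em ep0 ep1 em0 em1.
rewrite /Qtilde /Ptilde /Pnoisy !big_bool /= -/b.
rewrite -/(a true) -/(a false) -/(p true) -/(p false).
move=> Q0.
have hb0 : 0 <= b by rewrite hb; apply: addr_ge0.
set s := 1 - ep - em.
have hs : 0 < s by rewrite /s; lra.
have key : forall yy, a true * noise ep em true yy + a false * noise ep em false yy -
   b * (p true * noise ep em true yy + p false * noise ep em false yy)
   = (if yy then N * s else - (N * s)).
  move=> yy; rewrite /N.
  have -> : p false = 1 - p true by lra.
  rewrite hb /s /noise; case: yy; rewrite /=; ring.
have K := key y'; clear key; rewrite /noise in K.
have bne0 : b != 0 by apply: contra Q0 => /eqP ->; rewrite mul0r.
have bpos : 0 < b by rewrite lt0r bne0.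
move: Q0 K; case: y' => /= Q0 K.
- set Q := b * _ in Q0 K *.
  set Pt := (a true * _ + _) in K *.
  have Qlow : b * p true / 2 <= Q.
    rewrite /Q -mulrA ler_wpM2l //.
    have := hp0 false; have := hp0 true; nra.
  have Qpos : 0 < Q.
    rewrite lt0r Q0 /= /Q; apply: mulr_ge0 => //; apply: addr_ge0; apply: mulr_ge0 => //; lra.
  have -> : Pt / Q - 1 = (N * s) / Q.
    by rewrite -K mulrBl (divff (negbT (gt_eqF Qpos))).
  rewrite normrM normrM (gtr0_norm hs) normfV (gtr0_norm Qpos).
  have [p0|ppos] := eqVneq (p true) 0.
    have a0 : a true = 0 by have := hap true; have := ha0 true; rewrite p0; lra.
    have N0 : N = 0 by rewrite /N a0 p0; ring.
    by rewrite N0 normr0 !(mul0r, mulr0).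
  have ppos' : 0 < p true by rewrite lt0r ppos hp0.
  have hinv : Q^-1 <= 2 / (b * p true).
    have H : 0 < b * p true / 2 by rewrite divr_gt0 ?mulr_gt0.
    by rewrite -invf_div ler_pV2 ?inE ?unitfE ?Qpos ?andbT ?(gt_eqF H) ?H.
  apply: le_trans (ler_wpM2l (mulr_ge0 (normr_ge0 N) (ltW hs)) hinv) _.
  suff -> : 2 * `|N| / (b * p true) * s = `|N| * s * (2 / (b * p true)) by [].
  ring.
- set Q := b * _ in Q0 K *.
  set Pt := (a true * _ + _) in K *.
  have Qlow : b * p false / 2 <= Q.
    rewrite /Q -mulrA ler_wpM2l //.
    have := hp0 false; have := hp0 true; nra.
  have Qpos : 0 < Q.
    rewrite lt0r Q0 /= /Q; apply: mulr_ge0 => //; apply: addr_ge0; apply: mulr_ge0 => //; lra.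
  have -> : Pt / Q - 1 = - (N * s) / Q by rewrite -K mulrBl (divff (negbT (gt_eqF Qpos))).
  rewrite normrM normrN normrM (gtr0_norm hs) normfV (gtr0_norm Qpos).
  have [p0|ppos] := eqVneq (p false) 0.
    have a0 : a false = 0 by have := hap false; have := ha0 false; rewrite p0; lra.
    have N0 : N = 0 by rewrite /N a0 p0; ring.
    by rewrite N0 normr0 !(mul0r, mulr0).
  have ppos' : 0 < p false by rewrite lt0r ppos hp0.
  have hinv : Q^-1 <= 2 / (b * p false).
    have H : 0 < b * p false / 2 by rewrite divr_gt0 ?mulr_gt0.
    by rewrite -invf_div ler_pV2 ?inE ?unitfE ?Qpos ?andbT ?(gt_eqF H) ?H.
  apply: le_trans (ler_wpM2l (mulr_ge0 (normr_ge0 N) (ltW hs)) hinv) _.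
  suff -> : 2 * `|N| / (b * p false) * s = `|N| * s * (2 / (b * p false)) by [].
  ring.
Qed.
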